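(* None of the rules $\mathrm{MCC}$, $\mathrm{MED}$, $\mathrm{FULL}_H$ and $R_{rev}$ satisfies overlapping agenda separability: for each such rule $R$ there exist an agenda $\mathcal{A}$, an independent overlapping decomposition $\{\mathcal{A}_1,\mathcal{A}_2\}$ of $\mathcal{A}$ and a profile $P\in\mathcal{J}_{\mathcal{A}}^n$ such that $J^1\cap\mathcal{A}_2=J^2\cap\mathcal{A}_1$ for all $J^1\in R(P\downarrow\mathcal{A}_1)$, $J^2\in R(P\downarrow\mathcal{A}_2)$, yet $R(P)\neq\{J^1\cup J^2\mid J^1\in R(P\downarrow\mathcal{A}_1),\ J^2\in R(P\downarrow\mathcal{A}_2)\}$.
   Context: Fix a propositional language, a consistent formula $\Gamma$ and $n\ge1$ agents. An issue is a pair $\{\varphi,\neg\varphi\}$ with $\varphi$ neither a tautology nor a contradiction; an agenda $\mathcal{A}$ is a finite set of issues; a sub-agenda is a union of some of its issues. A set $S$ of formulas is consistent if $S\cup\{\Gamma\}$ is satisfiable. $\mathcal{J}_{\mathcal{A}}$ is the set of judgment sets $J\subseteq\mathcal{A}$ that are complete (contain $\varphi$ or $\neg\varphi$ for each issue) and consistent; likewise for sub-agendas. A profile is $P=\langle J_1,\dots,J_n\rangle\in\mathcal{J}_{\mathcal{A}}^n$ and $P\downarrow\mathcal{A}'=\langle J_1\cap\mathcal{A}',\dots,J_n\cap\mathcal{A}'\rangle$. $N(P,\varphi)=|\{i:\varphi\in J_i\}|$; $m(P)=\{\varphi\in\mathcal{A}:N(P,\varphi)>n/2\}$; $P$ is majority-consistent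 if $m(P)$ is consistent. $d_H(J,J')=|J\setminus J'|$; $D_H(\langle J_i\rangle,\langle J'_i\rangle)=\sum_i d_H(J_i,J'_i)$. Sub-agendas $\mathcal{A}_1,\mathcal{A}_2$ with $\mathcal{A}=\mathcal{A}_1\cup\mathcal{A}_2$ form an independent overlapping decomposition if for all $J^1\in\mathcal{J}_{\mathcal{A}_1}$, $J^2\in\mathcal{J}_{\mathcal{A}_2}$ with $J^1\cap\mathcal{A}_2=J^2\cap\mathcal{A}_1$, $J^1\cup J^2\in\mathcal{J}_{\mathcal{A}}$. Rules: $\mathrm{MCC}(P)$ is the set of $J\in\mathcal{J}_{\mathcal{A}}$ with $J\supseteq S$ for some consistent subset $S\subseteq m(P)$ of maximum cardinality. $\mathrm{MED}(P)=\arg\max_{J\in\mathcal{J}_{\mathcal{A}}}\sum_{\varphi\in J}N(P,\varphi)$. $\mathrm{FULL}_H(P)$ is the set of $J\in\mathcal{J}_{\mathcal{A}}$ with $J\supseteq m(Q)$ for some majority-consistent $Q\in\mathcal{J}_{\mathcal{A}}^n$ minimizing $D_H(P,Q)$ among majority-consistent profiles. $R_{rev}(P)=\arg\max_{J\in\mathcal{J}_{\mathcal{A}}}\sum_i\sum_{\varphi\in J}s_{rev}(J_i,\varphi)$ with $s_{rev}(J_i,\varphi)=\min\{d_H(J_i,J')\mid J'\in\mathcal{J}_{\mathcal{A}},\varphi\notin J'\}$. *)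

(* Defs.v *)
From Stdlib Require Import ClassicalEpsilon.
From HB Require Import structures.
From mathcomp Require Import all_boot.
Set Implicit Arguments. Unset Strict Implicit. Unset Printing Implicit Defensive.

Inductive form : Type :=
| Var of nat
| Neg of form
| And of form & form
| Or  of form & form
| Imp of form & form.

Fixpoint form_eqb (a b : form) : bool :=
  match a, b with
  | Var i, Var j => i == j
  | Neg a, Neg b => form_eqb a b
  | And a1 a2, And b1 b2 => form_eqb a1 b1 && form_eqb a2 b2
  | Or a1 a2, Or b1 b2 => form_eqb a1 b1 && form_eqb a2 b2
  | Imp a1 a2, Imp b1 b2 => form_eqb a1 b1 && form_eqb a2 b2
  | _, _ => false
  end.

Lemma form_eqb_refl a : form_eqb a a.
Proof. by elim: a => //= [a1 -> a2 ->|a1 -> a2 ->|a1 -> a2 ->]. Qed.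

Lemma form_eqb_eq a b : form_eqb a b -> a = b.
Proof.
elim: a b => [i|a IH|a1 IH1 a2 IH2|a1 IH1 a2 IH2|a1 IH1 a2 IH2]
       [j|b|b1 b2|b1 b2|b1 b2] //=.
- by move/eqP=> ->.
- by move/IH=> ->.
- by case/andP=> /IH1 -> /IH2 ->.
- by case/andP=> /IH1 -> /IH2 ->.
- by case/andP=> /IH1 -> /IH2 ->.
Qed.

Lemma form_eqbP : Equality.axiom form_eqb.
Proof.
move=> a b; apply: (iffP idP) => [/form_eqb_eq //|<-]; exact: form_eqb_refl.
Qed.

HB.instance Definition _ := hasDecEq.Build form form_eqbP.

Fixpoint eval (v : nat -> bool) (f : form) : bool :=
  match f with
  | Var i => v i
  | Neg a => ~~ eval v a
  | And a b => eval v a && eval v b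
  | Or a b => eval v a || eval v b
  | Imp a b => eval v a ==> eval v b
  end.

Definition tautology (f : form) : Prop := forall v, eval v f.
Definition contradiction (f : form) : Prop := forall v, ~~ eval v f.

(* Agendas.  An agenda is given by a list [ag] of formulas phi; each    *)
(* phi represents the issue {phi, ~phi}.  (Issues {phi,~phi} and        *)
(* {psi,~psi} coincide iff phi = psi syntactically.)                   *)
Definition is_agenda (ag : seq form) : Prop :=
  forall phi, phi \in ag -> ~ tautology phi /\ ~ contradiction phi.

Definition agl (ag : seq form) : seq form :=
  undup (flatten [seq [:: phi; Neg phi] | phi <- ag]).

Definition sub_agenda (ag1 ag : seq form) : Prop := {subset ag1 <= ag}.

Definition consistent (G : form) (S : pred form) : Prop :=
  exists v, eval v G /\ forall phi, S phi -> eval v phi.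

Definition is_js (G : form) (ag : seq form) (J : pred form) : Prop :=
  [/\ forall phi, J phi -> phi \in agl ag,
      forall phi, phi \in ag -> J phi || J (Neg phi)
    & consistent G J].

Definition profile (n : nat) := 'I_n -> pred form.

Definition is_profile G ag n (P : profile n) : Prop := forall i, is_js G ag (P i).

Definition restrict n (P : profile n) (ag1 : seq form) : profile n :=
  fun i phi => P i phi && (phi \in agl ag1).

Definition N n (P : profile n) (phi : form) : nat := #|[pred i : 'I_n | P i phi]|.

Definition maj ag n (P : profile n) : pred form :=
  fun phi => (phi \in agl ag) && (n < 2 * N P phi).

Definition maj_consistent G ag n (P : profile n) : Prop := consistent G (maj ag P).

Definition subsetF (S T : pred form) : Prop := forall phi, S phi -> T phi.

Definition dH ag (J J' : pred form) : nat :=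
  count (fun phi => J phi && ~~ J' phi) (agl ag).

Definition DH ag n (P Q : profile n) : nat := \sum_(i < n) dH ag (P i) (Q i).

(* Aggregation rules: [R G ag n P J] means J \in R(P).                  *)
Definition rule := form -> seq form -> forall n, profile n -> pred form -> Prop.

Definition card_in ag (S : pred form) : nat := count S (agl ag).

Definition MCC : rule := fun G ag n P J =>
  is_js G ag J /\
  exists S : pred form,
    [/\ subsetF S (maj ag P), consistent G S,
        (forall S' : pred form, subsetF S' (maj ag P) -> consistent G S' ->
            card_in ag S' <= card_in ag S)
      & subsetF S J].

Definition med_score ag n (P : profile n) (J : pred form) : nat :=
  \sum_(phi <- agl ag | J phi) N P phi.

Definition MED : rule := fun G ag n P J =>
  is_js G ag J /\
  forall J', is_js G ag J' -> med_score ag P J' <= med_score ag P J.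

Definition FULL_H : rule := fun G ag n P J =>
  is_js G ag J /\
  exists Q : profile n,
    [/\ is_profile G ag Q, maj_consistent G ag Q,
        (forall Q' : profile n, is_profile G ag Q' -> maj_consistent G ag Q' ->
            DH ag P Q <= DH ag P Q')
      & subsetF (maj ag Q) J].

(* s_rev(Ji, phi) = min { dH(Ji, J') | J' judgment set, phi \notin J' }.
   Chosen by (classical) description; when the set is empty the value is
   unspecified, which does not affect R_rev. *)
Definition srev_cand G ag (Ji : pred form) (phi : form) (k : nat) : Prop :=
  exists J', [/\ is_js G ag J', ~~ J' phi & dH ag Ji J' = k].

Definition srev G ag (Ji : pred form) (phi : form) : nat :=
  epsilon (inhabits 0%N)
    (fun k => srev_cand G ag Ji phi k /\
              forall k', srev_cand G ag Ji phi k' -> k <= k').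

Definition rev_score G ag n (P : profile n) (J : pred form) : nat :=
  \sum_(i < n) \sum_(phi <- agl ag | J phi) srev G ag (P i) phi.

Definition R_rev : rule := fun G ag n P J =>
  is_js G ag J /\
  forall J', is_js G ag J' -> rev_score G ag P J' <= rev_score G ag P J.

Definition agrees (ag1 ag2 : seq form) (J1 J2 : pred form) : Prop :=
  forall phi, (J1 phi && (phi \in agl ag2)) = (J2 phi && (phi \in agl ag1)).

Definition indep_overlap_decomp G (ag ag1 ag2 : seq form) : Prop :=
  [/\ sub_agenda ag1 ag, sub_agenda ag2 ag,
      agl ag =i [predU agl ag1 & agl ag2]
    & forall J1 J2, is_js G ag1 J1 -> is_js G ag2 J2 -> agrees ag1 ag2 J1 J2 ->
        is_js G ag [pred phi | J1 phi || J2 phi]].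

Definition violates_OAS (R : rule) : Prop :=
  exists (G : form) (n : nat) (ag ag1 ag2 : seq form) (P : profile n),
    [/\ 0 < n, consistent G pred0, is_agenda ag,
        indep_overlap_decomp G ag ag1 ag2 & is_profile G ag P] /\
        (forall J1 J2, R G ag1 n (restrict P ag1) J1 ->
                       R G ag2 n (restrict P ag2) J2 -> agrees ag1 ag2 J1 J2) /\
        ~ (forall J : pred form,
             R G ag n P J <->
             exists J1 J2, [/\ R G ag1 n (restrict P ag1) J1,
                               R G ag2 n (restrict P ag2) J2
                             & J =1 [pred phi | J1 phi || J2 phi]]).

(* Main.v *)
Require Import Defs.
From HB Require Import structures.
From Stdlib Require Import ClassicalEpsilon.
From mathcomp Require Import all_boot.
Set Implicit Arguments. Unset Strict Implicit. Unset Printing Implicit Defensive.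

Definition ext (b : seq bool) : nat -> bool := fun i => nth false b i.

Fixpoint vlt k (f : form) : bool :=
  match f with
  | Var i => i < k
  | Neg a => vlt k a
  | And a b => vlt k a && vlt k b
  | Or a b => vlt k a && vlt k b
  | Imp a b => vlt k a && vlt k b
  end.

Fixpoint allvals k : seq (seq bool) :=
  if k is k'.+1 then [seq true :: b | b <- allvals k'] ++ [seq false :: b | b <- allvals k']
  else [:: [::]].

Lemma allvals_mem k b : size b = k -> b \in allvals k.
Proof.
elim: k b => [|k IH] [|c b] //= [/IH Hb].
by rewrite mem_cat; case: c; [rewrite map_f | rewrite orbC map_f].
Qed.

Lemma eval_ext k v phi : vlt k phi -> eval (ext (map v (iota 0 k))) phi = eval v phi.
Proof.
elim: phi => [i|a IH|a IHa c IHc|a IHa c IHc|a IHa c IHc] /=.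
- by move=> Hi; rewrite /ext (nth_map 0) ?size_iota // nth_iota.
- by move=> /IH ->.
- by case/andP=> /IHa -> /IHc ->.
- by case/andP=> /IHa -> /IHc ->.
- by case/andP=> /IHa -> /IHc ->.
Qed.

Definition vb k (v : nat -> bool) := map v (iota 0 k).
Lemma vb_mem k v : vb k v \in allvals k.
Proof. by apply: allvals_mem; rewrite size_map size_iota. Qed.

Lemma consP G k (L : seq form) (S S' : pred form) :
  vlt k G -> all (vlt k) L -> (forall phi, S phi -> phi \in L) ->
  (forall phi, phi \in L -> S phi = S' phi) ->
  consistent G S <->
  has (fun b => eval (ext b) G && all (fun phi => S' phi ==> eval (ext b) phi) L) (allvals k).
Proof.
move=> HG HL HS HS'; split.
- case=> v [Gv Sv]; apply/hasP; exists (vb k v); first exact: vb_mem.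
  rewrite /vb eval_ext // Gv /=; apply/allP=> phi Hphi.
  rewrite -HS' //; apply/implyP=> /Sv; rewrite eval_ext //.
  exact: (allP HL).
- case/hasP=> b _ /andP[Gb /allP Hb]; exists (ext b); split=> // phi Sphi.
  have HphiL := HS _ Sphi.
  by move: (Hb _ HphiL); rewrite -HS' // Sphi.
Qed.

Definition jsvL (L : seq form) b : pred form := fun phi => (phi \in L) && eval (ext b) phi.
Notation jsv ag := (jsvL (agl ag)).
Definition gv G k := [seq b <- allvals k | eval (ext b) G].

Lemma agl_cases ag phi : phi \in agl ag -> phi \in ag \/ exists2 psi, psi \in ag & phi = Neg psi.
Proof.
rewrite /agl mem_undup => /flatten_mapP[psi Hpsi]; rewrite !inE => /orP[/eqP->|/eqP->].
- by left.
- by right; exists psi.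
Qed.

Lemma agl_in ag phi : phi \in ag -> (phi \in agl ag) && (Neg phi \in agl ag).
Proof.
move=> H; rewrite /agl !mem_undup; apply/andP; split; apply/flatten_mapP; exists phi => //;
by rewrite !inE eqxx ?orbT.
Qed.

Lemma is_js_ext G ag J J' : J =1 J' -> is_js G ag J -> is_js G ag J'.
Proof.
move=> E [H1 H2 [v [Gv Hv]]]; split.
- by move=> phi; rewrite -E; apply: H1.
- by move=> phi Hphi; rewrite -!E; apply: H2.
- by exists v; split=> // phi; rewrite -E; apply: Hv.
Qed.

Lemma jsv_js G ag k b : b \in gv G k -> is_js G ag (jsv ag b).
Proof.
rewrite mem_filter => /andP[Gb _]; split.
- by move=> phi /andP[].
- move=> phi Hphi; rewrite /jsvL; case/andP: (agl_in Hphi) => -> -> /=.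
  by case: (eval _ phi).
- by exists (ext b); split=> // phi /andP[].
Qed.

Lemma jsP G ag k J : vlt k G -> all (vlt k) (agl ag) ->
  is_js G ag J <-> exists2 b, b \in gv G k & J =1 jsv ag b.
Proof.
move=> HG HL; split; last first.
  by case=> b Hb E; apply: is_js_ext (jsv_js ag Hb) => phi; rewrite E.
case=> [H1 H2 [v [Gv Hv]]].
exists (vb k v); first by rewrite mem_filter vb_mem /vb eval_ext // Gv.
move=> phi; rewrite /jsvL.
case Hin: (phi \in agl ag); last by apply/negbTE; apply/negP=> /H1; rewrite Hin.
rewrite /= /vb eval_ext; last exact: (allP HL).
case: (agl_cases Hin) => [Hag|[psi Hpsi ->]].
- move: (H2 _ Hag); case Jp: (J phi) => /=; first by rewrite Hv.
  by move/Hv => /= /negbTE ->.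
- move: (H2 _ Hpsi); case Jn: (J (Neg psi)) => /=; first by move: (Hv _ Jn) => /= ->.
  by rewrite orbF => /Hv ->.
Qed.

Definition pof n (F : nat -> pred form) : profile n := fun i => F (val i).
Arguments pof : clear implicits.

Definition Nc n (F : nat -> pred form) phi := count (fun i => F i phi) (iota 0 n).

Lemma N_pof n F phi : N (pof n F) phi = Nc n F phi.
Proof.
rewrite /N /Nc cardE /enum_mem size_filter -val_enum_ord count_map.
by rewrite enumT; apply: eq_count.
Qed.
Lemma dummy : True. by [].
Qed.

Lemma sum_ord_pof n (f : nat -> nat) : \sum_(i < n) f (val i) = sumn [seq f i | i <- iota 0 n].
Proof. by rewrite -(big_mkord xpredT f) sumnE big_map /index_iota subn0. Qed.

Lemma sum_seq_sumn (s : seq form) (p : pred form) (f : form -> nat) :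
  \sum_(x <- s | p x) f x = sumn [seq f x | x <- s & p x].
Proof. by rewrite sumnE big_map big_filter. Qed.

Lemma N_ext n (P Q : profile n) phi : (forall i, P i =1 Q i) -> N P phi = N Q phi.
Proof. by move=> E; apply: eq_card => i; rewrite /= !inE E. Qed.

Definition maxl (s : seq nat) := foldr maxn 0 s.
Lemma maxl_ge x s : x \in s -> x <= maxl s.
Proof.
elim: s => //= y s IH; rewrite inE => /orP[/eqP->|/IH H]; first exact: leq_maxl.
exact: leq_trans H (leq_maxr _ _).
Qed.
Lemma maxl_mem s : s != [::] -> maxl s \in s.
Proof.
elim: s => //= y [|z s] IH _; first by rewrite maxn0 inE.
change (maxn y (maxl (z :: s)) \in y :: z :: s).
case: (leqP y (maxl (z :: s))) => H.
- by rewrite inE IH ?orbT.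
- by rewrite inE eqxx.
Qed.

Definition optset (f : seq bool -> nat) (l : seq (seq bool)) :=
  let m := maxl (map f l) in [seq b <- l | f b == m].

Lemma optset_ext f f' l : (forall b, f b = f' b) -> optset f l = optset f' l.
Proof.
move=> E; rewrite /optset (eq_map E); apply: eq_filter => b; by rewrite E.
Qed.

Lemma optsetP f l b : b \in l ->
  (forall b', b' \in l -> f b' <= f b) <-> b \in optset f l.
Proof.
move=> Hb; rewrite /optset mem_filter Hb ?andbT; split.
- move=> H; rewrite eqn_leq maxl_ge ?map_f //=.
  have /mapP[b' Hb' ->] : maxl (map f l) \in map f l.
    by apply: maxl_mem; case: (l) Hb.
  exact: H.
- by move/eqP=> -> b' Hb'; apply: maxl_ge; rewrite map_f.
Qed.

Lemma argmaxP G ag k (sc : pred form -> nat) J : vlt k G -> all (vlt k) (agl ag) ->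
  (forall J J', J =1 J' -> sc J = sc J') ->
  (is_js G ag J /\ forall J', is_js G ag J' -> sc J' <= sc J) <->
  exists2 b, b \in optset (fun b => sc (jsv ag b)) (gv G k) & J =1 jsv ag b.
Proof.
move=> HG HL Hsc; split.
- case=> /(jsP _ HG HL)[b Hb E] Hopt; exists b => //.
  apply/optsetP => // b' Hb'; rewrite -(Hsc _ _ E); apply: Hopt; exact: jsv_js Hb'.
- case=> b Hopt E; have Hb : b \in gv G k by move: Hopt; rewrite mem_filter => /andP[].
  split; first by apply: is_js_ext (jsv_js ag Hb) => phi; rewrite E.
  move=> J' /(jsP _ HG HL)[b' Hb' E']; rewrite (Hsc _ _ E') (Hsc _ _ E).
  by move/optsetP: Hopt; apply.
Qed.

Definition medc (L : seq form) n F (J : pred form) := sumn [seq Nc n F phi | phi <- L & J phi].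

Lemma MEDP G ag k L V (n : nat) (F : nat -> pred form) (J : pred form) : vlt k G -> all (vlt k) (agl ag) ->
  agl ag = L -> gv G k = V ->
  MED G ag (pof n F) J <->
  exists2 b, b \in optset (fun b => medc L n F (jsvL L b)) V & J =1 jsv ag b.
Proof.
move=> HG HL HL0 HV0; subst L V; rewrite /MED.
have E : forall J, med_score ag (pof n F) J = medc (agl ag) n F J.
  by move=> J0; rewrite /med_score sum_seq_sumn /medc; congr sumn; apply: eq_map => phi; rewrite N_pof.
rewrite -(optset_ext (gv G k) (fun b => E _)).
apply: argmaxP => // J1 J2 E12; rewrite !E /medc; congr sumn; congr map; exact: eq_filter.
Qed.

Fixpoint subs (s : seq form) : seq (seq form) :=
  if s is x :: s' then [seq x :: t | t <- subs s'] ++ subs s' else [:: [::]].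

Lemma filter_subs (p : pred form) s : filter p s \in subs s.
Proof.
elim: s => //= x s IH; rewrite mem_cat; case: (p x) => //.
by rewrite map_f.
by rewrite IH orbT.
Qed.

Lemma subs_sub s t : t \in subs s -> {subset t <= s}.
Proof.
elim: s t => [|x s IH] t /=; first by rewrite inE => /eqP-> .
rewrite mem_cat => /orP[/mapP[t' Ht' ->]|Ht] y.
- by rewrite !inE => /orP[->//|/(IH _ Ht') ->]; rewrite orbT.
- by move/(IH _ Ht) => H; rewrite inE H orbT.
Qed.

Definition majc (L : seq form) n F phi := (phi \in L) && (n < 2 * Nc n F phi).

Lemma maj_pof ag n F phi : maj ag (pof n F) phi = majc (agl ag) n F phi.
Proof. by rewrite /maj /majc N_pof. Qed.

Definition consb G k (s : seq form) :=
  has (fun b => eval (ext b) G && all (eval (ext b)) s) (allvals k).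

Lemma consbP G k s : vlt k G -> all (vlt k) s -> consistent G (mem s) <-> consb G k s.
Proof.
move=> HG Hs; rewrite (consP (L := s) (S' := fun phi => phi \in s) HG Hs) //.
have E : forall b, all (fun phi => (phi \in s) ==> eval (ext b) phi) s = all (eval (ext b)) s.
  by move=> b; apply: eq_in_all => phi ->.
by rewrite /consb; split=> /hasP[b Hb /andP[Gb Ha]]; apply/hasP; exists b => //;
  rewrite Gb /=; move: Ha; rewrite E.
Qed.

Lemma cons_ext G S S' : S =1 S' -> consistent G S -> consistent G S'.
Proof. by move=> E [v [Gv Hv]]; exists v; split=> // phi; rewrite -E; apply: Hv. Qed.

Definition cardc (L : seq form) (s : seq form) := count (mem s) L.

Definition mccS G k (L : seq form) n F :=
  let c := [seq s <- subs (filter (majc L n F) L) | consb G k s] in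
  [seq s <- c | all (fun s' => cardc L s' <= cardc L s) c].

Definition mccset G k (L : seq form) (V : seq (seq bool)) n F :=
  [seq b <- V | has (fun s => all (jsvL L b) s) (mccS G k L n F)].

Lemma MCCP G ag k L V (n : nat) (F : nat -> pred form) (J : pred form) :
  vlt k G -> all (vlt k) (agl ag) -> agl ag = L -> gv G k = V ->
  MCC G ag (pof n F) J <-> exists2 b, b \in mccset G k L V n F & J =1 jsv ag b.
Proof.
move=> HG HL HL0 HV0; subst L V.
have Hc : forall S, subsetF S (maj ag (pof n F)) ->
    filter S (agl ag) \in subs (filter (majc (agl ag) n F) (agl ag)).
  move=> S HS.
  have -> : filter S (agl ag) = filter S (filter (majc (agl ag) n F) (agl ag)).
    rewrite -filter_predI; apply: eq_filter => phi /=.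
    by case Sp: (S phi) => //=; move: (HS _ Sp); rewrite maj_pof => ->.
  exact: filter_subs.
have HmS : forall S, subsetF S (maj ag (pof n F)) -> S =1 mem (filter S (agl ag)).
  move=> S HS phi; rewrite /= mem_filter; case Sp: (S phi) => //=.
  by move: (HS _ Sp); case/andP.
have Hsv : forall s, s \in subs (filter (majc (agl ag) n F) (agl ag)) -> all (vlt k) s.
  move=> s /subs_sub Hs; apply/allP => phi /Hs; rewrite mem_filter => /andP[_].
  exact: (allP HL).
have Hsm : forall s, s \in subs (filter (majc (agl ag) n F) (agl ag)) ->
    subsetF (mem s) (maj ag (pof n F)).
  by move=> s /subs_sub Hs phi /Hs; rewrite mem_filter maj_pof => /andP[].
have Hcard : forall S, subsetF S (maj ag (pof n F)) ->
    card_in ag S = cardc (agl ag) (filter S (agl ag)).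
  move=> S HS; rewrite /card_in /cardc; apply: eq_in_count => phi Hphi.
  by rewrite /= mem_filter Hphi andbT.
split.
- case=> /(jsP _ HG HL)[b Hb E] [S [HS HSc Hmax HSJ]].
  exists b => //; rewrite mem_filter Hb andbT.
  apply/hasP; exists (filter S (agl ag)).
    rewrite /mccS mem_filter /= mem_filter Hc // andbT.
    have Hcb : consb G k (filter S (agl ag)).
      by apply/consbP => //; [exact: Hsv (Hc _ HS) | exact: cons_ext (HmS _ HS) HSc].
    rewrite Hcb andbT; apply/allP=> s'; rewrite mem_filter => /andP[Hs'c Hs'].
    rewrite -Hcard // -/(card_in ag (mem s')); apply: Hmax; first exact: Hsm.
    exact/(consbP HG (Hsv _ Hs')).
  apply/allP=> phi; rewrite mem_filter => /andP[Sp _]; rewrite -E; exact: HSJ.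
- case=> b; rewrite mem_filter => /andP[/hasP[s Hs Hall] Hb] E.
  move: Hs; rewrite /mccS mem_filter => /andP[Hmx]; rewrite mem_filter => /andP[Hcs Hsub].
  split; first by apply: is_js_ext (jsv_js ag Hb) => phi; rewrite E.
  exists (mem s); split.
  + exact: Hsm.
  + exact/(consbP HG (Hsv _ Hsub)).
  + move=> S' HS' HS'c; rewrite Hcard //.
    have H' : filter S' (agl ag) \in
        [seq s <- subs (filter (majc (agl ag) n F) (agl ag)) | consb G k s].
      rewrite mem_filter Hc // andbT; apply/(consbP HG (Hsv _ (Hc _ HS'))).
      exact: cons_ext (HmS _ HS') HS'c.

    exact: (allP Hmx) _ H'.
  + by move=> phi Hphi; rewrite E; exact: (allP Hall).
Qed.

Definition ofTr (L : seq form) (t : seq bool) : pred form :=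
  fun phi => (phi \in L) && nth false t (index phi L).

Definition Tset (L : seq form) (V : seq (seq bool)) := undup [seq map (jsvL L b) L | b <- V].

Fixpoint tuples n (T : seq (seq bool)) : seq (seq (seq bool)) :=
  if n is n'.+1 then [seq t :: q | t <- T, q <- tuples n' T] else [:: [::]].

Lemma tuples_mem n T qs : size qs = n -> all (mem T) qs -> qs \in tuples n T.
Proof.
elim: n qs => [|n IH] [|t qs] //= [Hs] /andP[Ht Hqs].
by apply/allpairsP; exists (t, qs); split=> //; apply: IH.
Qed.

Lemma tuples_inv n T qs : qs \in tuples n T -> size qs = n /\ all (mem T) qs.
Proof.
elim: n qs => [|n IH] qs /=; first by rewrite inE => /eqP->.
case/allpairsP=> [[t q] [/= Ht Hq ->]]; case: (IH _ Hq) => <- Ha.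
by rewrite /= Ht Ha.
Qed.

Definition Qof (L : seq form) (qs : seq (seq bool)) : nat -> pred form :=
  fun i => ofTr L (nth [::] qs i).

Lemma ofTr_map L (J : pred form) : (forall phi, J phi -> phi \in L) -> J =1 ofTr L (map J L).
Proof.
move=> HJ phi; rewrite /ofTr; case Hin: (phi \in L) => /=.
- by rewrite (nth_map phi) ?index_mem // nth_index.
- by apply/negbTE/negP => /HJ; rewrite Hin.
Qed.

Lemma prof_tr G ag k n (Q : profile n) : vlt k G -> all (vlt k) (agl ag) ->
  is_profile G ag Q ->
  exists2 qs, qs \in tuples n (Tset (agl ag) (gv G k)) & forall i : 'I_n, Q i =1 Qof (agl ag) qs i.
Proof.
move=> HG HL HQ; exists [seq map (Q i) (agl ag) | i <- enum 'I_n].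
  apply: tuples_mem; first by rewrite size_map size_enum_ord.
  apply/allP=> t /mapP[i _ ->]; case: (HQ i) => H1 _ _.
  case/(jsP _ HG HL): (HQ i) => b Hb E.
  rewrite /= mem_undup (eq_map E); exact: map_f.
move=> i; rewrite /Qof (nth_map i) ?size_enum_ord ?ltn_ord // nth_ord_enum.
by case: (HQ i) => H1 _ _; apply: ofTr_map.
Qed.

Lemma Qof_prof G ag k n qs : vlt k G -> all (vlt k) (agl ag) ->
  qs \in tuples n (Tset (agl ag) (gv G k)) -> is_profile G ag (pof n (Qof (agl ag) qs)).
Proof.
move=> HG HL /tuples_inv[Hs /allP Ha] i; rewrite /pof /Qof.
have : nth [::] qs i \in Tset (agl ag) (gv G k) by apply: Ha; rewrite mem_nth // Hs.
rewrite mem_undup => /mapP[b Hb ->].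
apply: is_js_ext (jsv_js ag Hb); apply: ofTr_map => phi /andP[] //.
Qed.

Lemma maj_ext ag n (P Q : profile n) : (forall i, P i =1 Q i) -> maj ag P =1 maj ag Q.
Proof. by move=> E phi; rewrite /maj (N_ext _ E). Qed.

Lemma dH_ext ag J J' K K' : J =1 J' -> K =1 K' -> dH ag J K = dH ag J' K'.
Proof. by move=> E1 E2; apply: eq_count => phi; rewrite E1 E2. Qed.

Lemma DH_ext ag n (P Q Q' : profile n) : (forall i, Q i =1 Q' i) -> DH ag P Q = DH ag P Q'.
Proof. by move=> E; apply: eq_bigr => i _; apply: dH_ext. Qed.

Definition dHL (L : seq form) (J K : pred form) := count (fun phi => J phi && ~~ K phi) L.
Definition DHc (L : seq form) n F F' := sumn [seq dHL L (F i) (F' i) | i <- iota 0 n].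

Lemma DH_pof ag n F F' : DH ag (pof n F) (pof n F') = DHc (agl ag) n F F'.
Proof. exact: (sum_ord_pof n (fun i => dH ag (F i) (F' i))). Qed.

Definition mcons G k (L : seq form) n F :=
  has (fun b => eval (ext b) G && all (fun phi => majc L n F phi ==> eval (ext b) phi) L)
      (allvals k).

Lemma mconsP G ag k n F : vlt k G -> all (vlt k) (agl ag) ->
  maj_consistent G ag (pof n F) <-> mcons G k (agl ag) n F.
Proof.
move=> HG HL; apply: consP => //; first by move=> phi /andP[].
by move=> phi _; rewrite maj_pof.
Qed.

Definition fullchk G k (L : seq form) n F d (T : seq (seq (seq bool))) :=
  all (fun qs => if d <= DHc L n F (Qof L qs) then true
                 else ~~ mcons G k L n (Qof L qs)) T.

Fixpoint prodl (ls : seq (seq (seq bool))) : seq (seq (seq bool)) :=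
  if ls is T :: ls' then [seq t :: q | t <- T, q <- prodl ls'] else [:: [::]].

Lemma prodl_mem ls qs : size qs = size ls ->
  (forall i, i < size ls -> nth [::] qs i \in nth [::] ls i) -> qs \in prodl ls.
Proof.
elim: ls qs => [|T ls IH] [|t qs] //= [Hs] H.
apply/allpairsP; exists (t, qs); split=> //=; first exact: (H 0).
by apply: IH => // i Hi; exact: (H i.+1).
Qed.

Lemma sumn_ge x s : x \in s -> x <= sumn s.
Proof.
elim: s => //= y s IH; rewrite inE => /orP[/eqP->|/IH H]; first exact: leq_addr.
exact: leq_trans H (leq_addl _ _).
Qed.

Definition nbh (L : seq form) (V : seq (seq bool)) n F d :=
  prodl [seq [seq t <- Tset L V | dHL L (F i) (ofTr L t) < d] | i <- iota 0 n].

Lemma FULL_in G ag k L V n F qs J d : vlt k G -> all (vlt k) (agl ag) ->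
  agl ag = L -> gv G k = V ->
  qs \in tuples n (Tset L V) -> mcons G k L n (Qof L qs) -> is_js G ag J ->
  all (fun phi => majc L n (Qof L qs) phi ==> J phi) L ->
  DHc L n F (Qof L qs) = d ->
  fullchk G k L n F d (nbh L V n F d) ->
  FULL_H G ag (pof n F) J.
Proof.
move=> HG HL HL0 HV0; subst L V.
move=> Hqs Hmc HJ Hsub Hd Hchk; split=> //.
exists (pof n (Qof (agl ag) qs)); split.
- exact: Qof_prof Hqs.
- exact/(@mconsP G ag k n (Qof (agl ag) qs) HG HL).
- move=> Q' HQ' HQ'c; case: (prof_tr HG HL HQ') => qs' Hqs' E.
  rewrite (DH_ext _ _ E) !DH_pof Hd.
  have Hm : mcons G k (agl ag) n (Qof (agl ag) qs').
    apply/(@mconsP G ag k n (Qof (agl ag) qs') HG HL); apply: cons_ext HQ'c; exact: maj_ext.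
  case: (leqP d _) => // Hlt.
  have Hin : qs' \in nbh (agl ag) (gv G k) n F d.
    case: (tuples_inv Hqs') => Hs /allP Ha.
    apply: prodl_mem; first by rewrite size_map size_iota.
    move=> i; rewrite size_map size_iota => Hi.
    rewrite (nth_map 0) ?size_iota // nth_iota // add0n mem_filter.
    have -> : nth [::] qs' i \in Tset (agl ag) (gv G k) by apply: Ha; rewrite mem_nth // Hs.
    rewrite andbT.
    apply: leq_ltn_trans Hlt; apply: sumn_ge; apply/mapP; exists i => //.
    by rewrite mem_iota.
  by move: (allP Hchk _ Hin); rewrite leqNgt Hlt /= Hm.
- move=> phi; rewrite maj_pof => Hm; have Hin : phi \in agl ag by case/andP: Hm.
  by move: (allP Hsub _ Hin); rewrite Hm.
Qed.

Definition fullchk2 G k (L : seq form) n F d phi0 (T : seq (seq (seq bool))) :=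
  all (fun qs => if DHc L n F (Qof L qs) <= d then
                   (if mcons G k L n (Qof L qs) then majc L n (Qof L qs) phi0 else true)
                 else true) T.

Lemma FULL_sub G ag k L V n F qs0 phi0 J : vlt k G -> all (vlt k) (agl ag) ->
  agl ag = L -> gv G k = V ->
  qs0 \in tuples n (Tset L V) -> mcons G k L n (Qof L qs0) ->
  fullchk2 G k L n F (DHc L n F (Qof L qs0)) phi0 (tuples n (Tset L V)) ->
  FULL_H G ag (pof n F) J -> J phi0.
Proof.
move=> HG HL HL0 HV0; subst L V.
move=> Hqs0 Hmc0 Hchk [_ [Q [HQp HQc Hmin HQJ]]].
have := Hmin _ (Qof_prof HG HL Hqs0) (proj2 (@mconsP G ag k n _ HG HL) Hmc0).
case: (prof_tr HG HL HQp) => qs Hqs E.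
rewrite (DH_ext _ _ E) !DH_pof => Hle.
have Hm : mcons G k (agl ag) n (Qof (agl ag) qs).
  apply/(@mconsP G ag k n (Qof (agl ag) qs) HG HL); apply: cons_ext HQc; exact: maj_ext.
move: (allP Hchk _ Hqs); rewrite Hle Hm => Hphi.
apply: HQJ; rewrite (maj_ext _ E) maj_pof; exact: Hphi.
Qed.

Definition minl (s : seq nat) := foldr minn (maxl s) s.

Lemma foldr_minn_le m x s : x \in s -> foldr minn m s <= x.
Proof.
elim: s => //= y s IH; rewrite inE => /orP[/eqP->|/IH H]; first exact: geq_minl.
exact: leq_trans (geq_minr _ _) H.
Qed.

Lemma foldr_minn_mem m s : foldr minn m s \in m :: s.
Proof.
elim: s => [|y s IH] /=; first by rewrite inE.
rewrite /minn; case: ifP => _; first by rewrite !inE eqxx orbT.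
move: IH; rewrite !inE => /orP[->|->]; by rewrite ?orbT.
Qed.

Lemma minl_le x s : x \in s -> minl s <= x.
Proof. exact: foldr_minn_le. Qed.

Lemma minl_mem s : s != [::] -> minl s \in s.
Proof.
move=> Hs; have := foldr_minn_mem (maxl s) s; rewrite inE => /orP[/eqP E|//].
rewrite /minl E; exact: maxl_mem.
Qed.

Definition srevc (L : seq form) (V : seq (seq bool)) (Ji : pred form) phi :=
  minl [seq dHL L Ji (jsvL L b) | b <- V & ~~ jsvL L b phi].

Lemma srevP G ag k Ji phi : vlt k G -> all (vlt k) (agl ag) ->
  has (fun b => ~~ jsv ag b phi) (gv G k) -> srev G ag Ji phi = srevc (agl ag) (gv G k) Ji phi.
Proof.
move=> HG HL Hne.
set m := srevc (agl ag) (gv G k) Ji phi.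
have Hc : srev_cand G ag Ji phi m.
  have : m \in [seq dH ag Ji (jsv ag b) | b <- gv G k & ~~ jsv ag b phi].
    apply: minl_mem; case/hasP: Hne => b Hb Hnb.
    apply/eqP=> E; have : dH ag Ji (jsv ag b) \in [seq dH ag Ji (jsv ag b) | b <- gv G k & ~~ jsv ag b phi].
      by apply/mapP; exists b; rewrite // mem_filter Hnb.
    by rewrite E.
  case/mapP=> b; rewrite mem_filter => /andP[Hnb Hb] ->.
  by exists (jsv ag b); split=> //; exact: jsv_js Hb.
have Hmin : forall k', srev_cand G ag Ji phi k' -> m <= k'.
  move=> k' [J' [HJ' Hn <-]]; case/(jsP _ HG HL): HJ' => b Hb E.
  rewrite (dH_ext _ (frefl Ji) E); apply: minl_le; apply/mapP; exists b => //.
  by rewrite mem_filter Hb andbT -E.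
have Hex : exists x, srev_cand G ag Ji phi x /\ (forall k', srev_cand G ag Ji phi k' -> x <= k').
  by exists m.
have [He1 He2] := epsilon_spec (inhabits 0) _ Hex.
by rewrite /srev; apply/eqP; rewrite eqn_leq (He2 _ Hc) (Hmin _ He1).
Qed.

Definition revc (L : seq form) (V : seq (seq bool)) n F (J : pred form) :=
  sumn [seq sumn [seq srevc L V (F i) phi | phi <- L & J phi] | i <- iota 0 n].

Lemma RREVP G ag k L V (n : nat) (F : nat -> pred form) (J : pred form) :
  vlt k G -> all (vlt k) (agl ag) -> agl ag = L -> gv G k = V ->
  all (fun phi => has (fun b => ~~ jsvL L b phi) V) L ->
  R_rev G ag (pof n F) J <->
  exists2 b, b \in optset (fun b => revc L V n F (jsvL L b)) V & J =1 jsv ag b.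
Proof.
move=> HG HL HL0 HV0; subst L V; move=> Hne; rewrite /R_rev.
have E : forall J, rev_score G ag (pof n F) J = revc (agl ag) (gv G k) n F J.
  move=> J0; rewrite /rev_score.
  rewrite (sum_ord_pof n (fun i => \sum_(phi <- agl ag | J0 phi) srev G ag (F i) phi)).
  rewrite /revc; congr sumn; apply: eq_map => i; rewrite sum_seq_sumn; congr sumn.
  apply/eq_in_map => phi; rewrite mem_filter => /andP[_ Hphi].
  apply: srevP => //; exact: (allP Hne).
rewrite -(optset_ext (gv G k) (fun b => E _)).
apply: argmaxP => // J1 J2 E12; rewrite /rev_score; apply: eq_bigr => i _.
exact: eq_bigl.
Qed.

Definition agrchk (L1 L2 : seq form) (S1 S2 : seq (seq bool)) :=
  all (fun b1 => all (fun b2 => all (fun phi => (phi \in L2) ==>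
         (eval (ext b1) phi == eval (ext b2) phi)) L1) S2) S1.

Lemma viol (R : rule) G n ag ag1 ag2 (P : profile n) S1 S2 J0 phi0 :
  0 < n -> consistent G pred0 -> is_agenda ag -> indep_overlap_decomp G ag ag1 ag2 ->
  is_profile G ag P ->
  (forall J, R G ag1 n (restrict P ag1) J -> exists2 b, b \in S1 & J =1 jsv ag1 b) ->
  (forall J, R G ag2 n (restrict P ag2) J -> exists2 b, b \in S2 & J =1 jsv ag2 b) ->
  agrchk (agl ag1) (agl ag2) S1 S2 ->
  R G ag n P J0 -> J0 phi0 = false -> phi0 \in agl ag1 ->
  all (fun b => eval (ext b) phi0) S1 ->
  violates_OAS R.
Proof.
move=> Hn Hc Ha Hd Hp H1 H2 Hagr HR0 HJ0 Hphi0 HS1.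
exists G, n, ag, ag1, ag2, P; split; first by split.
split.
- move=> J1 J2 /H1[b1 Hb1 E1] /H2[b2 Hb2 E2] phi.
  rewrite E1 E2 /jsvL.
  case M1: (phi \in agl ag1); case M2: (phi \in agl ag2); rewrite /= ?andbF //.
  have := allP (allP (allP Hagr _ Hb1) _ Hb2) _ M1; rewrite M2 /= => /eqP ->.
  by rewrite andbT.
- move=> H; case: (proj1 (H J0) HR0) => J1 [J2 [/H1[b1 Hb1 E1] _ E]].
  move: (E phi0); rewrite HJ0 /= E1 /jsvL Hphi0 (allP HS1 _ Hb1) //.
Qed.

Definition x1 := Var 0. Definition x2 := Var 1. Definition y1 := Var 2.
Definition y2 := Var 3. Definition z1 := Var 4. Definition z2 := Var 5.
Definition G0 := And (And (Neg (And (And y1 y2) x1)) (Neg (And (And y1 y2) x2)))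
                     (And (Neg (And (And z1 z2) x1)) (Neg (And (And z1 z2) x2))).
Definition ag := [:: x1; x2; y1; y2; z1; z2].
Definition ag1 := [:: x1; x2; y1; y2].
Definition ag2 := [:: x1; x2; z1; z2].
Definition L0 := [:: Var 0; Neg (Var 0); Var 1; Neg (Var 1); Var 2; Neg (Var 2);
                     Var 3; Neg (Var 3); Var 4; Neg (Var 4); Var 5; Neg (Var 5)].
Definition L1 := [:: Var 0; Neg (Var 0); Var 1; Neg (Var 1); Var 2; Neg (Var 2);
                     Var 3; Neg (Var 3)].
Definition L2 := [:: Var 0; Neg (Var 0); Var 1; Neg (Var 1); Var 4; Neg (Var 4);
                     Var 5; Neg (Var 5)].
Definition V0 := gv G0 6.

Lemma HG : vlt 6 G0. Proof. by []. Qed.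
Lemma aglE0 : agl ag = L0. Proof. by vm_compute. Qed.
Lemma aglE1 : agl ag1 = L1. Proof. by vm_compute. Qed.
Lemma aglE2 : agl ag2 = L2. Proof. by vm_compute. Qed.
Lemma HL0 : all (vlt 6) (agl ag). Proof. by rewrite aglE0. Qed.
Lemma HL1 : all (vlt 6) (agl ag1). Proof. by rewrite aglE1. Qed.
Lemma HL2 : all (vlt 6) (agl ag2). Proof. by rewrite aglE2. Qed.
Lemma gvE : gv G0 6 = V0. Proof. by []. Qed.

Lemma cons0 : consistent G0 pred0.
Proof. by exists (fun _ => false). Qed.

Lemma agenda0 : is_agenda ag.
Proof.
move=> phi; have -> : ag = map Var (iota 0 6) by [].
case/mapP=> i _ ->; split.
- by move/(_ (fun _ => false)).
- by move/(_ (fun _ => true)).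
Qed.

Lemma aglU phi : (phi \in L0) = (phi \in L1) || (phi \in L2).
Proof.
rewrite -mem_cat; apply/idP/idP => H.
- by have /allP := (isT : all (fun x => x \in L1 ++ L2) L0); apply.
- by have /allP := (isT : all (fun x => x \in L0) (L1 ++ L2)); apply.
Qed.

Definition comb (b1 b2 : seq bool) := take 4 b1 ++ drop 4 b2.
Definition indchk := all (fun b1 => all (fun b2 =>
   if (eval (ext b1) x1 == eval (ext b2) x1) && (eval (ext b1) x2 == eval (ext b2) x2) then
     (comb b1 b2 \in V0) &&
     all (fun phi => (jsvL L1 b1 phi || jsvL L2 b2 phi) == jsvL L0 (comb b1 b2) phi) L0
   else true) V0) V0.
Lemma indchk_ok : indchk. Proof. by vm_compute. Qed.

Lemma m11 : x1 \in L1. Proof. by []. Qed.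
Lemma m12 : x1 \in L2. Proof. by []. Qed.
Lemma m21 : x2 \in L1. Proof. by []. Qed.
Lemma m22 : x2 \in L2. Proof. by []. Qed.

Lemma decomp0 : indep_overlap_decomp G0 ag ag1 ag2.
Proof.
split.
- by move=> phi; have /allP := (isT : all (fun x => x \in ag) ag1); apply.
- by move=> phi; have /allP := (isT : all (fun x => x \in ag) ag2); apply.
- by move=> phi; rewrite aglE0 aglU -aglE1 -aglE2 inE.
move=> J1 J2 /(jsP _ HG HL1)[b1 Hb1 E1] /(jsP _ HG HL2)[b2 Hb2 E2] Hagr.
rewrite aglE1 in E1; rewrite aglE2 in E2.
have e1 : eval (ext b1) x1 = eval (ext b2) x1.
  by move: (Hagr x1); rewrite E1 E2 /jsvL aglE1 aglE2 m11 m12 /= !andbT.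
have e2 : eval (ext b1) x2 = eval (ext b2) x2.
  by move: (Hagr x2); rewrite E1 E2 /jsvL aglE1 aglE2 m21 m22 /= !andbT.
have := allP (allP indchk_ok _ Hb1) _ Hb2; rewrite e1 e2 !eqxx => /andP[Hc Hall].
apply: is_js_ext (jsv_js ag Hc) => phi; rewrite /= E1 E2 aglE0.
case Hin: (phi \in L0).
- by move: (allP Hall _ Hin) => /eqP ->.
- rewrite /jsvL Hin; move: Hin; rewrite aglU => /norP[/negbTE -> /negbTE ->] //.
Qed.

Lemma prof0 pb n : size pb = n -> all (fun b => b \in V0) pb ->
  is_profile G0 ag (pof n (fun i => jsvL L0 (nth [::] pb i))).
Proof.
move=> Hs Ha i; rewrite /pof -aglE0; apply: (@jsv_js G0 ag 6).
by apply: (allP Ha); apply: mem_nth; rewrite Hs ltn_ord.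
Qed.

Definition pb3 := [:: [:: true; true; true; false; true; false];
                      [:: true; true; false; true; false; true];
                      [:: false; false; true; true; true; true]].
Definition F3 i := jsvL L0 (nth [::] pb3 i).
Definition F3r (L : seq form) i phi := F3 i phi && (phi \in L).
Definition b03 := [:: false; false; true; true; true; true].

Lemma prof3 : is_profile G0 ag (pof 3 F3).
Proof. by apply: prof0. Qed.

Lemma viol_MED : violates_OAS MED.
Proof.
apply: (@viol MED G0 3 ag ag1 ag2 (pof 3 F3)
  (optset (fun b => medc L1 3 (F3r L1) (jsvL L1 b)) V0)
  (optset (fun b => medc L2 3 (F3r L2) (jsvL L2 b)) V0) (jsv ag b03) x2).
- by [].
- exact: cons0.
- exact: agenda0.
- exact: decomp0.
- exact: prof3.
- move=> J HJ; exact: (proj1 (@MEDP G0 ag1 6 L1 V0 3 (F3r L1) J HG HL1 aglE1 gvE) HJ).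
- move=> J HJ; exact: (proj1 (@MEDP G0 ag2 6 L2 V0 3 (F3r L2) J HG HL2 aglE2 gvE) HJ).
- by vm_compute.
- apply/(@MEDP G0 ag 6 L0 V0 3 F3 _ HG HL0 aglE0 gvE); exists b03; [by vm_compute | by []].
- by vm_compute.
- by vm_compute.
- by vm_compute.
Qed.

Lemma viol_MCC : violates_OAS MCC.
Proof.
apply: (@viol MCC G0 3 ag ag1 ag2 (pof 3 F3)
  (mccset G0 6 L1 V0 3 (F3r L1)) (mccset G0 6 L2 V0 3 (F3r L2)) (jsv ag b03) x2).
- by [].
- exact: cons0.
- exact: agenda0.
- exact: decomp0.
- exact: prof3.
- move=> J HJ; exact: (proj1 (@MCCP G0 ag1 6 L1 V0 3 (F3r L1) J HG HL1 aglE1 gvE) HJ).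
- move=> J HJ; exact: (proj1 (@MCCP G0 ag2 6 L2 V0 3 (F3r L2) J HG HL2 aglE2 gvE) HJ).
- by vm_compute.
- apply/(@MCCP G0 ag 6 L0 V0 3 F3 _ HG HL0 aglE0 gvE); exists b03; [by vm_compute | by []].
- by vm_compute.
- by vm_compute.
- by vm_compute.
Qed.

Definition trs (L : seq form) (qb : seq (seq bool)) := [seq map (jsvL L b) L | b <- qb].
Definition qs1 := trs L1 [:: [:: true; true; false; false; true; false];
                             [:: true; true; false; true; false; true];
                             [:: false; false; true; true; true; true]].
Definition qs2 := trs L2 [:: [:: true; true; true; false; false; false];
                             [:: true; true; false; true; false; true];
                             [:: false; false; true; true; true; true]].
Definition qs0 := trs L0 [:: [:: false; false; true; false; true; false];
                             [:: true; true; false; true; false; true];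
                             [:: false; false; true; true; true; true]].
Definition S12 := [seq b <- V0 | eval (ext b) x1 && eval (ext b) x2].

Lemma full_sub1 J : FULL_H G0 ag1 (restrict (pof 3 F3) ag1) J -> exists2 b, b \in S12 & J =1 jsv ag1 b.
Proof.
move=> HJ; have HJ' : FULL_H G0 ag1 (pof 3 (F3r L1)) J := HJ.
have Hx1 := @FULL_sub G0 ag1 6 L1 V0 3 (F3r L1) qs1 x1 J HG HL1 aglE1 gvE
  ltac:(by vm_compute) ltac:(by vm_compute) ltac:(by vm_compute) HJ'.
have Hx2 := @FULL_sub G0 ag1 6 L1 V0 3 (F3r L1) qs1 x2 J HG HL1 aglE1 gvE
  ltac:(by vm_compute) ltac:(by vm_compute) ltac:(by vm_compute) HJ'.
case: HJ => /(jsP _ HG HL1)[b Hb E] _; exists b => //.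
move: Hx1 Hx2; rewrite !E /jsvL aglE1 m11 m21 /= => H1 H2.
by rewrite mem_filter Hb andbT; apply/andP; split; [exact: H1 | exact: H2].
Qed.

Lemma full_sub2 J : FULL_H G0 ag2 (restrict (pof 3 F3) ag2) J -> exists2 b, b \in S12 & J =1 jsv ag2 b.
Proof.
move=> HJ; have HJ' : FULL_H G0 ag2 (pof 3 (F3r L2)) J := HJ.
have Hx1 := @FULL_sub G0 ag2 6 L2 V0 3 (F3r L2) qs2 x1 J HG HL2 aglE2 gvE
  ltac:(by vm_compute) ltac:(by vm_compute) ltac:(by vm_compute) HJ'.
have Hx2 := @FULL_sub G0 ag2 6 L2 V0 3 (F3r L2) qs2 x2 J HG HL2 aglE2 gvE
  ltac:(by vm_compute) ltac:(by vm_compute) ltac:(by vm_compute) HJ'.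
case: HJ => /(jsP _ HG HL2)[b Hb E] _; exists b => //.
move: Hx1 Hx2; rewrite !E /jsvL aglE2 m12 m22 /= => H1 H2.
by rewrite mem_filter Hb andbT; apply/andP; split; [exact: H1 | exact: H2].
Qed.

Lemma viol_FULL : violates_OAS FULL_H.
Proof.
apply: (@viol FULL_H G0 3 ag ag1 ag2 (pof 3 F3) S12 S12 (jsv ag b03) x2).
- by [].
- exact: cons0.
- exact: agenda0.
- exact: decomp0.
- exact: prof3.
- exact: full_sub1.
- exact: full_sub2.
- by vm_compute.
- apply: (@FULL_in G0 ag 6 L0 V0 3 F3 qs0 _ 2 HG HL0 aglE0 gvE).
  + by apply: tuples_mem; vm_compute.
  + by vm_compute.
  + rewrite aglE0; apply: (@jsv_js G0 ag 6); by vm_compute.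
  + by vm_compute.
  + by vm_compute.
  + by vm_compute.
- by vm_compute.
- by vm_compute.
- by vm_compute.
Qed.

Definition pb4 := [:: [:: false; false; true; true; true; true];
                      [:: false; true; false; false; false; false];
                      [:: false; true; false; false; false; false];
                      [:: false; true; false; false; false; false]].
Definition F4 i := jsvL L0 (nth [::] pb4 i).
Definition F4r (L : seq form) i phi := F4 i phi && (phi \in L).
Definition b04 := [:: false; false; false; false; false; false].

Lemma viol_RREV : violates_OAS R_rev.
Proof.
apply: (@viol R_rev G0 4 ag ag1 ag2 (pof 4 F4)
  (optset (fun b => revc L1 V0 4 (F4r L1) (jsvL L1 b)) V0)
  (optset (fun b => revc L2 V0 4 (F4r L2) (jsvL L2 b)) V0) (jsv ag b04) x2).
- by [].
- exact: cons0.
- exact: agenda0.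
- exact: decomp0.
- by apply: prof0.
- move=> J HJ; exact: (proj1 (@RREVP G0 ag1 6 L1 V0 4 (F4r L1) J HG HL1 aglE1 gvE
    ltac:(by vm_compute)) HJ).
- move=> J HJ; exact: (proj1 (@RREVP G0 ag2 6 L2 V0 4 (F4r L2) J HG HL2 aglE2 gvE
    ltac:(by vm_compute)) HJ).
- by vm_compute.
- apply/(@RREVP G0 ag 6 L0 V0 4 F4 _ HG HL0 aglE0 gvE ltac:(by vm_compute)).
  exists b04; [by vm_compute | by []].
- by vm_compute.
- by vm_compute.
- by vm_compute.
Qed.

Theorem proposition5 :
  violates_OAS MCC /\ violates_OAS MED /\ violates_OAS FULL_H /\ violates_OAS R_rev.
Proof.
split; first exact: viol_MCC.
split; first exact: viol_MED.
split; first exact: viol_FULL.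
exact: viol_RREV.
Qed.
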